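(* For every integer $k\ge 2$, the complete $k$-partite graph $K(2,2,\ldots,2)$ (with $k$ parts, each of size $2$) has Hall number $h(K(2,\ldots,2))=k$.
   Context: All graphs are finite and simple. A list assignment $L$ to a graph $G$ assigns a finite set $L(v)$ to each vertex $v$; a proper $L$-coloring is a map $\psi$ with $\psi(v)\in L(v)$ for all $v$ and $\psi(u)\ne\psi(v)$ for every edge $uv$. For a subgraph $H$ of $G$ and a color $\sigma$, let $H_\sigma$ denote the subgraph of $H$ induced by $\{v\in V(H):\sigma\in L(v)\}$, and let $\alpha$ denote the independence number (with $\alpha$ of the null graph equal to $0$). $G$ and $L$ satisfy Hall's condition if $\sum_{\sigma}\alpha(H_\sigma)\ge |V(H)|$ for every subgraph $H$ of $G$, the sum being over all colors. The Hall number $h(G)$ is the smallest positive integer $k$ such that $G$ has a proper $L$-coloring whenever $G$ and $L$ satisfy Hall's condition and $|L(v)|\ge k$ for every $v\in V(G)$. *)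

(* Defs.v *)
From mathcomp Require Import all_boot.
Set Implicit Arguments. Unset Strict Implicit. Unset Printing Implicit Defensive.

Definition simple_graph (V : finType) (e : rel V) : Prop :=
  irreflexive e /\ symmetric e.

Definition is_subgraph (V : finType) (e : rel V) (W : {set V}) (E : rel V) : Prop :=
  symmetric E /\ (forall u v, E u v -> [&& u \in W, v \in W & e u v]).

Definition independent_in (V : finType) (W : {set V}) (E : rel V) (S : {set V}) : bool :=
  (S \subset W) && [forall u in S, forall v in S, ~~ E u v].

Definition alpha (V : finType) (W : {set V}) (E : rel V) : nat :=
  \max_(S : {set V} | independent_in W E S) #|S|.

Definition restrict_color (V C : finType) (L : V -> {set C}) (W : {set V}) (c : C)
  : {set V} := [set v in W | c \in L v].

Definition alpha_color (V C : finType) (L : V -> {set C}) (W : {set V}) (E : rel V)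
  (c : C) : nat :=
  let Wc := restrict_color L W c in
  alpha Wc [rel u v | [&& u \in Wc, v \in Wc & E u v]].

Definition hall_condition (V C : finType) (e : rel V) (L : V -> {set C}) : Prop :=
  forall (W : {set V}) (E : rel V), is_subgraph e W E ->
    \sum_(c : C) alpha_color L W E c >= #|W|.

Definition proper_L_coloring (V C : finType) (e : rel V) (L : V -> {set C})
  (f : V -> C) : Prop :=
  (forall v, f v \in L v) /\ (forall u v, e u v -> f u != f v).

Definition L_colorable (V C : finType) (e : rel V) (L : V -> {set C}) : Prop :=
  exists f : V -> C, proper_L_coloring e L f.

Definition hall_property (V : finType) (e : rel V) (k : nat) : Prop :=
  forall (C : finType) (L : V -> {set C}),
    hall_condition e L -> (forall v, k <= #|L v|) -> L_colorable e L.

Definition hall_number_is (V : finType) (e : rel V) (k : nat) : Prop :=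
  0 < k /\ hall_property e k /\ (forall j, 0 < j -> hall_property e j -> k <= j).

(* The complete k-partite graph K(2,...,2): vertices (part i, copy b),
   adjacent iff in different parts. *)
Definition K2_vertex (k : nat) : finType := ('I_k * bool)%type.
Definition K2_adj (k : nat) : rel (K2_vertex k) := fun u v => u.1 != v.1.
Arguments K2_adj k : clear implicits.
Arguments K2_vertex k : clear implicits.

(* Main.v *)
Require Import Defs.
From mathcomp Require Import all_boot zify.
Set Implicit Arguments. Unset Strict Implicit. Unset Printing Implicit Defensive.


Section Hall.
Variables (T C : finType) (c0 : C).

Lemma hall_marriage : forall m (X : {set T}) (L : T -> {set C}), #|X| <= m ->
  (forall Y : {set T}, Y \subset X -> #|Y| <= #|\bigcup_(v in Y) L v|) ->
  exists f : T -> C, (forall v, v \in X -> f v \in L v) /\ {in X &, injective f}.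
Proof.
elim=> [|m IH] X L hX hH.
  have X0 : X = set0 by apply/cards0_eq; lia.
  by exists (fun _ => c0); split=> [v|u v]; rewrite X0 inE.
case: (boolP [exists Y : {set T}, [&& Y \subset X, Y != set0, Y != X &
          #|\bigcup_(v in Y) L v| <= #|Y|]]).
  case/existsP=> Y /and4P [sYX nY0 nYX hNY].
  have ltYX : #|Y| < #|X| by apply: proper_card; rewrite properEneq nYX.
  have [f1 [f1L f1i]] : exists f : T -> C, (forall v, v \in Y -> f v \in L v) /\ {in Y &, injective f}.
    apply: (IH Y L); first lia.
    by move=> Z sZY; apply: hH; apply: subset_trans sZY sYX.
  set NY := \bigcup_(v in Y) L v.
  have Y0 : 0 < #|Y| by rewrite card_gt0.
  have [f2 [f2L f2i]] : exists f : T -> C, (forall v, v \in X :\: Y -> f v \in L v :\: NY)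
       /\ {in X :\: Y &, injective f}.
    apply: (IH (X :\: Y) (fun v => L v :\: NY)).
      rewrite cardsD (setIidPr sYX); lia.
    move=> Z sZ.
    have -> : \bigcup_(v in Z) (L v :\: NY) = (\bigcup_(v in Z) L v) :\: NY.
      apply/setP=> c; apply/bigcupP/setDP.
        by case=> v vZ /setDP [cL cN]; split=> //; apply/bigcupP; exists v.
      by case=> /bigcupP [v vZ cL] cN; exists v=> //; apply/setDP.
    have := hH (Z :|: Y); rewrite subUset sYX andbT.
    have sZX : Z \subset X by apply: subset_trans sZ (subsetDl _ _).
    rewrite sZX bigcup_setU => /(_ isT).
    have dZY : Z :&: Y = set0.
      apply/setP=> v; rewrite !inE; apply/negP=> /andP [vZ vY].
      by have := subsetP sZ v vZ; rewrite inE vY.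
    rewrite cardsU dZY cards0 cardsU cardsD -/NY.
    have := subset_leq_card (subsetIl (\bigcup_(v in Z) L v) NY).
    have := subset_leq_card (subsetIr (\bigcup_(v in Z) L v) NY).
    have := hNY; rewrite -/NY; lia.
  exists (fun v => if v \in Y then f1 v else f2 v); split.
    move=> v vX; case: ifP=> vY; first exact: f1L.
    have h : v \in X :\: Y by rewrite inE vY vX.
    by case/setDP: (f2L v h).
  move=> u v uX vX /=.
  case: ifP=> uY; case: ifP=> vY.
  - exact: f1i.
  - move=> e; have h : v \in X :\: Y by rewrite inE vY vX.
    case/setDP: (f2L v h) => _.
    by rewrite -e; case/negP; apply/bigcupP; exists u=> //; apply: f1L.
  - move=> e; have h : u \in X :\: Y by rewrite inE uY uX.
    case/setDP: (f2L u h) => _.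
    by rewrite e; case/negP; apply/bigcupP; exists v=> //; apply: f1L.
  - by apply: f2i; rewrite inE ?uY ?vY ?uX ?vX.
rewrite negb_exists => /forallP hB.
case: (set_0Vmem X) => [X0|[x xX]].
  by exists (fun _ => c0); split=> [v|u v]; rewrite X0 inE.
have : 0 < #|L x|.
  have := hH [set x]; rewrite sub1set xX big_set1 cards1; exact.
rewrite card_gt0 => /set0Pn [c cLx].
have [f' [f'L f'i]] : exists f : T -> C, (forall v, v \in X :\ x -> f v \in L v :\ c)
       /\ {in X :\ x &, injective f}.
  apply: (IH (X :\ x) (fun v => L v :\ c)).
    by move: hX; rewrite (cardsD1 x X) xX; lia.
  move=> Z sZ.
  case: (set_0Vmem Z) => [->|[z zZ]]; first by rewrite cards0.
  have sZX : Z \subset X by apply: subset_trans sZ (subsetDl _ _).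
  have nZX : Z != X.
    apply/eqP=> e; have := subsetP sZ x; rewrite e xX !inE eqxx => /(_ isT).
    done.
  have nZ0 : Z != set0 by apply/set0Pn; exists z.
  have := hB Z; rewrite sZX nZ0 nZX /= -ltnNge => h.
  have sub : (\bigcup_(v in Z) L v) :\ c \subset \bigcup_(v in Z) (L v :\ c).
    apply/subsetP=> d /setD1P [dc /bigcupP [v vZ dL]].
    by apply/bigcupP; exists v=> //; apply/setD1P.
  have := subset_leq_card sub.
  have := cardsD1 c (\bigcup_(v in Z) L v).
  case: (c \in _); lia.
exists (fun v => if v == x then c else f' v); split.
  move=> v vX; case: eqP=> [->//|/eqP vx].
  have h : v \in X :\ x by rewrite !inE vx vX.
  by case/setD1P: (f'L v h).
move=> u v uX vX /=.
case: eqP=> [->|/eqP ux]; case: eqP=> [->|/eqP vx] //.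
- move=> e; have h : v \in X :\ x by rewrite !inE vx vX.
  by case/setD1P: (f'L v h); rewrite -e eqxx.
- move=> e; have h : u \in X :\ x by rewrite !inE ux uX.
  by case/setD1P: (f'L u h); rewrite e eqxx.
- by apply: f'i; rewrite !inE ?ux ?vx ?uX ?vX.
Qed.
End Hall.

Lemma ert (k : nat) (C : finType) (c0 : C) : forall m (P : {set 'I_k})
  (L : ('I_k * bool)%type -> {set C}), #|P| = m ->
  (forall v : ('I_k * bool)%type, v.1 \in P -> m <= #|L v|) ->
  exists f : ('I_k * bool)%type -> C, (forall v, v.1 \in P -> f v \in L v) /\
    (forall u v, u.1 \in P -> v.1 \in P -> u.1 != v.1 -> f u != f v).
Proof.
elim=> [|m IH] P L hP hL.
  have P0 : P = set0 by apply/cards0_eq.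
  by exists (fun _ => c0); split=> [v|u v]; rewrite P0 inE.
case: (boolP [exists i in P, exists c, (c \in L (i, false)) && (c \in L (i, true))]).
  case/exists_inP=> i iP /existsP [c /andP [c0L c1L]].
  case: (IH (P :\ i) (fun v => L v :\ c)) => [||f' [f'L f'p]].
  - by move: hP; rewrite (cardsD1 i P) iP; lia.
  - move=> v; rewrite inE => /andP [_ vP].
    have := hL v vP; have := cardsD1 c (L v); case: (c \in L v); lia.
  exists (fun v => if v.1 == i then c else f' v); split.
    move=> [j b] /= jP; case: eqP=> [->|/eqP ji]; first by case: b.
    have h : (j, b).1 \in P :\ i by rewrite /= !inE ji jP.
    by case/setD1P: (f'L _ h).
  move=> [j1 b1] [j2 b2] /= j1P j2P j12.
  case: (j1 =P i)=> [e1|/eqP n1]; case: (j2 =P i)=> [e2|/eqP n2].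
  - by move: j12; rewrite e1 e2 eqxx.
  - have h : (j2, b2).1 \in P :\ i by rewrite /= !inE n2 j2P.
    by case/setD1P: (f'L _ h); rewrite eq_sym.
  - have h : (j1, b1).1 \in P :\ i by rewrite /= !inE n1 j1P.
    by case/setD1P: (f'L _ h).
  - by apply: f'p; rewrite //= !inE ?n1 ?n2 ?j1P ?j2P.
rewrite negb_exists_in => /forall_inP hd.
set X := [set v : ('I_k * bool)%type | v.1 \in P].
have cX : #|X| = (m.+1).*2.
  have -> : X = setX P [set: bool] by apply/setP=> -[i b]; rewrite !inE andbT.
  by rewrite cardsX cardsT card_bool hP; lia.
case: (hall_marriage c0 (m := #|X|) (L := L) (X := X) (leqnn _)) => [|f [fL fi]].
  move=> Y sYX.
  case: (set_0Vmem Y) => [->|[y yY]]; first by rewrite cards0.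
  have yX := subsetP sYX y yY; rewrite inE in yX.
  case: (boolP [forall u in Y, forall v in Y, (u.1 == v.1) ==> (u == v)]).
    move=> /forall_inP hi.
    have : #|Y| = #|[set v.1 | v in Y]|.
      rewrite card_in_imset // => u v uY vY e.
      by have /forall_inP /(_ v vY) := hi u uY; rewrite e eqxx => /implyP /(_ isT) /eqP.
    have : [set v.1 | v in Y] \subset P.
      apply/subsetP=> i /imsetP [v vY ->].
      by have := subsetP sYX v vY; rewrite inE.
    move/subset_leq_card.
    have : L y \subset \bigcup_(v in Y) L v by apply: bigcup_sup.
    move/subset_leq_card; have := hL y yX; rewrite -hP => h1 h2 h3 h4.
    by rewrite h4; apply: leq_trans h3 _; apply: leq_trans h1 h2.
  rewrite negb_forall_in => /exists_inP [u uY].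
  rewrite negb_forall_in => /exists_inP [v vY].
  rewrite negb_imply => /andP [/eqP e nuv].
  have uP : u.1 \in P by have := subsetP sYX u uY; rewrite inE.
  have : L u :|: L v \subset \bigcup_(w in Y) L w.
    by rewrite subUset !(bigcup_sup _ uY, bigcup_sup _ vY).
  move/subset_leq_card.
  have dj : L u :&: L v = set0.
    apply/setP=> c; rewrite !inE; apply/negP=> /andP [cu cv].
    move: u v uY vY e nuv cu cv uP => [i1 b1] [i2 b2] _ _ /= e.
    rewrite -e => nuv cu cv uP.
    have := hd i1 uP; rewrite negb_exists => /forallP /(_ c) /negP; apply.
    by case: b1 b2 nuv cu cv => [] []; rewrite ?eqxx // => _ cu cv; apply/andP.
  rewrite cardsU dj cards0.
  have := hL u uP; have := hL v; rewrite -e => /(_ uP).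
  have := subset_leq_card sYX.
  lia.
exists f; split; first by move=> v vP; apply: fL; rewrite inE.
move=> u v uP vP nuv; apply/negP=> /eqP e.
have := fi u v; rewrite !inE uP vP => /(_ isT isT e) ue.
by move: nuv; rewrite ue eqxx.
Qed.

Section Alpha.
Variables (k : nat) (C : finType) (L : K2_vertex k -> {set C}).

Lemma alpha_part (W : {set K2_vertex k}) (E : rel (K2_vertex k)) (c : C) (S : {set K2_vertex k}) :
  is_subgraph (K2_adj k) W E ->
  (forall v, v \in S -> (v \in W) && (c \in L v)) ->
  (forall u v, u \in S -> v \in S -> u.1 = v.1) ->
  #|S| <= alpha_color L W E c.
Proof.
move=> [_ hE] hS hP; rewrite /alpha_color /alpha.
apply: leq_bigmax_cond.
rewrite /independent_in; apply/andP; split.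
  by apply/subsetP=> v /hS vW; rewrite /restrict_color inE.
apply/forall_inP=> u uS; apply/forall_inP=> v vS /=.
apply/negP=> /and3P [_ _ /hE /and3P [_ _]].
by rewrite /K2_adj (hP u v uS vS) eqxx.
Qed.

Lemma alpha_ge1 W E c v : is_subgraph (K2_adj k) W E -> v \in W -> c \in L v ->
  1 <= alpha_color L W E c.
Proof.
move=> hs vW cL; rewrite -(cards1 v); apply: alpha_part=> //.
  by move=> x; rewrite inE => /eqP ->; rewrite vW cL.
by move=> x y; rewrite !inE => /eqP -> /eqP ->.
Qed.

Lemma alpha_ge2 W E c i : is_subgraph (K2_adj k) W E -> (i, false) \in W -> (i, true) \in W ->
  c \in L (i, false) -> c \in L (i, true) -> 2 <= alpha_color L W E c.
Proof.
move=> hs h1 h2 c1 c2.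
have <- : #|[set (i, false); (i, true)]| = 2 by rewrite cards2 xpair_eqE eqxx.
apply: alpha_part=> //.
  by move=> x; rewrite !inE => /orP [] /eqP ->; rewrite ?h1 ?h2 ?c1 ?c2.
by move=> x y; rewrite !inE => /orP [] /eqP -> /orP [] /eqP ->.
Qed.
End Alpha.

Section Counter.
Variable n : nat.
Definition Col := ('I_n.+1 + bool)%type.
Definition Aset : {set Col} := [set c : Col | if c is inl _ then true else false].
Definition Bset : {set Col} := [set c : Col | match c with inl i => (i < n)%N | inr _ => true end].
Definition Xset (b : bool) : {set Col} := [set c : Col | match c with inl _ => true | inr b' => b' == b end].
Definition Lc (v : K2_vertex n.+2) : {set Col} :=
  if v.1 == ord_max then Xset v.2 else if v.2 then Bset else Aset.

Definition wd (i : 'I_n.+1) : 'I_n.+2 := widen_ord (leqnSn _) i.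

Lemma wd_max i : wd i != ord_max.
Proof. by rewrite -(inj_eq val_inj) /= neq_ltn ltn_ord. Qed.

Lemma wd_inj : injective wd.
Proof. by move=> i j /(congr1 val) /= /val_inj. Qed.

Lemma Lc_size v : n.+1 <= #|Lc v|.
Proof.
have hA : n.+1 <= #|Aset|.
  have e : #|(@inl 'I_n.+1 bool) @: [set: 'I_n.+1]| = n.+1.
    by rewrite card_imset ?cardsT ?card_ord //; exact: inl_inj.
  apply: leq_trans (eq_leq (esym e)) _.
  by apply: subset_leq_card; apply/subsetP=> c /imsetP [i _ ->]; rewrite inE.
rewrite /Lc; case: eqP=> _.
  apply: leq_trans hA (subset_leq_card _); apply/subsetP=> -[i|b]; rewrite !inE //.
case: v.2 => //.
pose h (i : 'I_n.+1) : Col := if (i < n)%N then inl i else inr false.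
have hi : injective h.
  move=> i j; rewrite /h.
  case: (ltnP i n) => hi1; case: (ltnP j n) => hj1 // e.
  - by case: e.
  - apply: ord_inj; have := ltn_ord i; have := ltn_ord j; lia.
have e : #|h @: [set: 'I_n.+1]| = n.+1 by rewrite card_imset ?cardsT ?card_ord.
apply: leq_trans (eq_leq (esym e)) _.
apply: subset_leq_card; apply/subsetP=> c /imsetP [i _ ->]; rewrite inE /h.
by case: ltnP.
Qed.

Lemma not_col : ~ L_colorable (K2_adj n.+2) Lc.
Proof.
case=> f [fL fp].
have adj : forall u v, u.1 != v.1 -> f u != f v by move=> u v; apply: fp.
pose g (i : 'I_n.+1) : 'I_n.+1 := if f (wd i, false) is inl c then c else ord0.
have fa : forall i, f (wd i, false) = inl (g i).
  move=> i; have := fL (wd i, false); rewrite /Lc /= (negbTE (wd_max i)) /g inE.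
  by case: (f _).
have gi : injective g.
  move=> i j e; apply: wd_inj; apply/eqP; apply: contraT => ne.
  by have := adj (wd i, false) (wd j, false) ne; rewrite !fa e eqxx.
have [ginv gK ginvK] := injF_bij gi.
have fm : forall b, f (ord_max, b) = inr b.
  move=> b; have := fL (ord_max, b); rewrite /Lc /= eqxx inE.
  case e: (f _) => [c|b'] //; last by move/eqP->.
  have := adj (wd (ginv c), false) (ord_max, b) (wd_max _).
  by rewrite fa ginvK e eqxx.
have := fL (wd (ginv ord_max), true); rewrite /Lc /= (negbTE (wd_max _)) inE.
case e: (f _) => [c|b] hc.
  have := adj (wd (ginv ord_max), true) (wd (ginv c), false).
  rewrite /= fa ginvK e eqxx.
  case: eqP => [/wd_inj /(congr1 g)|_ /(_ isT)//].
  by rewrite !ginvK => ec; move: hc; rewrite -ec /= ltnn.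
have := adj (wd (ginv ord_max), true) (ord_max, b) (wd_max _).
by rewrite e fm eqxx.
Qed.

End Counter.

Lemma Lc_hall n : hall_condition (K2_adj n.+2) (@Lc n).
Proof.
move=> W E hs.
set al := alpha_color (@Lc n) W E.
have h0 : ((ord0 : 'I_n.+2) == ord_max) = false by rewrite -(inj_eq val_inj).
have Uin : forall (i : 'I_n) v, inl (widen_ord (leqnSn n) i) \in Lc v.
  move=> i [j b]; rewrite /Lc /=; case: (_ == _); rewrite ?inE //.
  by case: b; rewrite inE //= ltn_ord.
set F := [exists i, ((i,false) \in W) && ((i,true) \in W)].
case: (set_0Vmem W) => [->|[v0 v0W]]; first by rewrite cards0.
have hU : forall i : 'I_n, (1 + F) <= al (inl (widen_ord (leqnSn n) i)).
  move=> i; case: (boolP F) => [/existsP [j /andP [j1 j2]]|_].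
  - exact: alpha_ge2 hs j1 j2 (Uin _ _) (Uin _ _).
  - exact: alpha_ge1 hs v0W (Uin _ _).
have hS : n * (1 + F) <= \sum_(i < n) al (inl (widen_ord (leqnSn n) i)).
  rewrite -[n in n * _]card_ord -sum_nat_const; exact: leq_sum.
pose u : K2_vertex n.+2 := (ord_max, false).
pose w : K2_vertex n.+2 := (ord_max, true).
pose a0 : K2_vertex n.+2 := (ord0, false).
pose b0 : K2_vertex n.+2 := (ord0, true).
have hz2 : 2 * ((u \in W) && (w \in W)) <= al (inl ord_max).
  case: (boolP (u \in W)) => uW; case: (boolP (w \in W)) => wW //=.
  by apply: alpha_ge2 hs uW wW _ _; rewrite /Lc /= eqxx inE.
have hz1 : [|| u \in W, w \in W | a0 \in W] <= al (inl ord_max).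
  case: (boolP (u \in W)) => uW.
    by apply: alpha_ge1 hs uW _; rewrite /Lc /= eqxx inE.
  case: (boolP (w \in W)) => wW.
    by apply: alpha_ge1 hs wW _; rewrite /Lc /= eqxx inE.
  case: (boolP (a0 \in W)) => aW //.
  by apply: alpha_ge1 hs aW _; rewrite /Lc /a0 /= ?h0 inE.
have hx : (u \in W) || (b0 \in W) <= al (inr false).
  case: (boolP (u \in W)) => uW.
    by apply: alpha_ge1 hs uW _; rewrite /Lc /= eqxx inE.
  case: (boolP (b0 \in W)) => bW //.
  by apply: alpha_ge1 hs bW _; rewrite /Lc /b0 /= ?h0 inE.
have hy : (w \in W) || (b0 \in W) <= al (inr true).
  case: (boolP (w \in W)) => wW.
    by apply: alpha_ge1 hs wW _; rewrite /Lc /= eqxx inE.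
  case: (boolP (b0 \in W)) => bW //.
  by apply: alpha_ge1 hs bW _; rewrite /Lc /b0 /= ?h0 inE.
pose t (i : 'I_n.+2) : nat := ((i, false) \in W) + ((i, true) \in W).
have ht : forall i, t i <= 1 + F.
  move=> i; rewrite /t; case: (boolP ((i, false) \in W)) => h1;
    case: (boolP ((i, true) \in W)) => h2 /=; try by rewrite ?addn0 ?add0n ?leq_addr.
  have -> : F by apply/existsP; exists i; rewrite h1 h2.
  done.
have cW : #|W| = \sum_i t i.
  have -> : \sum_i t i = \sum_i \sum_(b : bool) (((i,b) \in W) : nat).
    by apply: eq_bigr => j _; rewrite big_bool /t addnC.
  rewrite pair_bigA /= -sum1_card big_mkcond /=.
  by apply: eq_bigr => -[j b] _ /=; case: (_ \in W).
have cW2 : #|W| <= t ord0 + n * (1 + F) + t ord_max.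
  rewrite cW big_ord_recl big_ord_recr /=.
  have -> : lift ord0 (ord_max : 'I_n.+1) = ord_max by apply/val_inj.
  have : \sum_(i < n) t (lift ord0 (widen_ord (leqnSn n) i)) <= n * (1 + F).
    rewrite -[n in n * _]card_ord -sum_nat_const; apply: leq_sum => j _; exact: ht.
  by move=> h; rewrite addnA leq_add2r leq_add2l.
rewrite big_sumType /= big_ord_recr /= big_bool /=.
move: hS hz2 hz1 hx hy cW2; rewrite /t -/u -/w -/a0 -/b0 -/al.
case: (u \in W); case: (w \in W); case: (a0 \in W); case: (b0 \in W); rewrite /=; lia.
Qed.

Theorem theorem3 (k : nat) : 2 <= k -> hall_number_is (K2_adj k) k.
Proof.
case: k => [|[|n]] // _.
split=> //; split.
  move=> C L _ hL.
  have : 0 < #|L (ord0, false)| by apply: leq_trans (hL _).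
  case/card_gt0P => c0 _.
  have [] := ert c0 (m := n.+2) (P := [set: 'I_n.+2]) (L := L).
  - by rewrite cardsT card_ord.
  - by move=> v _; apply: hL.
  move=> f [fL fp]; exists f; split=> [v|u v huv]; first by apply: fL; rewrite inE.
  by apply: fp; rewrite ?inE.
move=> j j0 hj; rewrite leqNgt; apply/negP=> ltj.
apply: (@not_col n); apply: hj (@Lc_hall n) _.
move=> v; apply: leq_trans (Lc_size v); lia.
Qed.
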